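(* Under the standing assumptions, assume $n\le m$ and that all kept singular values $S_{kk}$ are strictly positive. Set $\widetilde{dU}_2:=(\mathbb{1}_n-UU^\dagger)dU$ and $\widetilde{dV}_2:=(\mathbb{1}_m-VV^\dagger)dV$. Then $dU=U(U^\dagger dU)+\widetilde{dU}_2$, $dV=V(V^\dagger dV)+\widetilde{dV}_2$, the matrix $\widetilde{dU}_2$ satisfies the Sylvester equation $$\widetilde{dU}_2\,S^2-AA^\dagger\,\widetilde{dU}_2=(\mathbb{1}_n-UU^\dagger)\,dA\,V S+A(\mathbb{1}_m-VV^\dagger)\,dA^\dagger U,$$ and $$\widetilde{dV}_2=(\mathbb{1}_m-VV^\dagger)\,dA^\dagger U S^{-1}+A^\dagger\,\widetilde{dU}_2\,S^{-1}.$$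
   Context: Let $n,m\ge1$, $r=\min(n,m)$ and $1\le t<r$. Let $\tau\mapsto A(\tau)\in\mathbb{C}^{n\times m}$ be differentiable, and suppose there are differentiable maps $\tau\mapsto U\in\mathbb{C}^{n\times t}$, $S\in\mathbb{R}^{t\times t}$, $V\in\mathbb{C}^{m\times t}$, $U_\perp\in\mathbb{C}^{n\times(r-t)}$, $S_\perp\in\mathbb{R}^{(r-t)\times(r-t)}$, $V_\perp\in\mathbb{C}^{m\times(r-t)}$ such that for every $\tau$: $A=USV^\dagger+U_\perp S_\perp V_\perp^\dagger$ is a (thin) singular value decomposition, i.e. $S,S_\perp$ are diagonal with nonnegative entries, $(U\,|\,U_\perp)$ and $(V\,|\,V_\perp)$ have orthonormal columns. Here $d$ denotes the derivative with respect to $\tau$, $^\dagger$ the conjugate transpose, $\mathbb{1}_k$ the $k\times k$ identity. (The formulas involve only $A,dA,U,S,V$, not $U_\perp,S_\perp,V_\perp$.) *)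

(* Defs.v *)
From HB Require Import structures.
From mathcomp Require Import all_boot all_order all_algebra.
From mathcomp Require Import complex.
From mathcomp Require Import reals topology normedtype derive.
Set Implicit Arguments. Unset Strict Implicit. Unset Printing Implicit Defensive.
Import Order.TTheory GRing.Theory Num.Theory.
Import numFieldNormedType.Exports.
Local Open Scope ring_scope.

Definition ctr (R : rcfType) (n m : nat) (A : 'M[R[i]]_(n, m)) : 'M[R[i]]_(m, n) :=
  (map_mx (@conjc R) A)^T.

Definition cplx_mx (R : rcfType) (n m : nat) (S : 'M[R]_(n, m)) : 'M[R[i]]_(n, m) :=
  map_mx (real_complex R) S.

Definition has_cderiv (R : realType) (f df : R -> R[i]) : Prop :=
  forall t : R, is_derive t 1 (fun s => @complex.Re R (f s)) (@complex.Re R (df t)) /\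
                is_derive t 1 (fun s => @complex.Im R (f s)) (@complex.Im R (df t)).

Definition has_mxderiv (R : realType) (n m : nat)
  (A dA : R -> 'M[R[i]]_(n, m)) : Prop :=
  forall i j, has_cderiv (fun s => A s i j) (fun s => dA s i j).

Definition has_rmxderiv (R : realType) (n m : nat)
  (A dA : R -> 'M[R]_(n, m)) : Prop :=
  forall (i : 'I_n) (j : 'I_m) (t : R), is_derive t 1 (fun s => A s i j) (dA t i j).

Definition cmx_differentiable (R : realType) (n m : nat) (A : R -> 'M[R[i]]_(n, m)) :=
  exists dA, has_mxderiv A dA.

Definition rmx_differentiable (R : realType) (n m : nat) (A : R -> 'M[R]_(n, m)) :=
  exists dA, has_rmxderiv A dA.

Definition nonneg_diag (R : realType) (k : nat) (S : 'M[R]_k) : Prop :=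
  (forall i j : 'I_k, i != j -> S i j = 0) /\ (forall i : 'I_k, 0 <= S i i).

Definition orthonormal_cols (R : rcfType) (n k : nat) (W : 'M[R[i]]_(n, k)) : Prop :=
  ctr W *m W = 1%:M.

(* Main.v *)
Require Import Defs.
From HB Require Import structures.
From mathcomp Require Import all_boot all_order all_algebra.
From mathcomp Require Import complex.
From mathcomp Require Import reals topology normedtype derive.
From mathcomp Require Import ring.
From mathcomp Require Import boolp.
Import Order.TTheory GRing.Theory Num.Theory.
Import numFieldNormedType.Exports.
Local Open Scope ring_scope.
Set Implicit Arguments. Unset Strict Implicit. Unset Printing Implicit Defensive.

Section CD.
Variable R : realType.

Lemma isd_ext (t : R) (F G : R -> R) d : is_derive t 1 F d -> (forall s, F s = G s) -> is_derive t 1 G d.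
Proof. by move=> h e; have <- : F = G by apply/funext. Qed.

Lemma ReM (x y : R[i]) : complex.Re (x * y) = complex.Re x * complex.Re y - complex.Im x * complex.Im y.
Proof. by case: x; case: y. Qed.
Lemma ImM (x y : R[i]) : complex.Im (x * y) = complex.Re x * complex.Im y + complex.Im x * complex.Re y.
Proof. by case: x; case: y. Qed.
Lemma ReD (x y : R[i]) : complex.Re (x + y) = complex.Re x + complex.Re y.
Proof. by case: x; case: y. Qed.
Lemma ImD (x y : R[i]) : complex.Im (x + y) = complex.Im x + complex.Im y.
Proof. by case: x; case: y. Qed.
Lemma ReJ (x : R[i]) : complex.Re (conjc x) = complex.Re x.
Proof. by case: x. Qed.
Lemma ImJ (x : R[i]) : complex.Im (conjc x) = - complex.Im x.
Proof. by case: x. Qed.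

Lemma cderivD (f g df dg : R -> R[i]) : has_cderiv f df -> has_cderiv g dg ->
  has_cderiv (fun s => f s + g s) (fun s => df s + dg s).
Proof.
move=> hf hg t; have [f1 f2] := hf t; have [g1 g2] := hg t; split.
  rewrite ReD; apply: isd_ext (is_deriveD f1 g1) _ => s /=; by rewrite ReD.
rewrite ImD; apply: isd_ext (is_deriveD f2 g2) _ => s /=; by rewrite ImD.
Qed.

Lemma cderiv0 : has_cderiv (fun _ : R => 0 : R[i]) (fun _ => 0).
Proof.
move=> t; split; apply: isd_ext (is_derive_cst (0:R) t 1) _ => s //.
Qed.

Lemma cderiv_sum k (f df : 'I_k -> R -> R[i]) : (forall l, has_cderiv (f l) (df l)) ->
  has_cderiv (fun s => \sum_(l < k) f l s) (fun s => \sum_(l < k) df l s).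
Proof.
elim: k f df => [|k IH] f df h.
  have E : forall g : 'I_0 -> R[i], \sum_(l < 0) g l = 0 by move=> g; rewrite big_ord0.
  move=> t; have [a b] := cderiv0 t; rewrite E; split.
    by apply: isd_ext a _ => s; rewrite E.
  by apply: isd_ext b _ => s; rewrite E.
have := cderivD (IH (fun l => f (widen_ord (leqnSn k) l)) (fun l => df (widen_ord (leqnSn k) l)) (fun l => h _)) (h ord_max).
move=> H t; have [a b] := H t; rewrite big_ord_recr /=; split.
  by apply: isd_ext a _ => s; rewrite big_ord_recr.
by apply: isd_ext b _ => s; rewrite big_ord_recr.
Qed.

Lemma cderivM (f g df dg : R -> R[i]) : has_cderiv f df -> has_cderiv g dg ->
  has_cderiv (fun s => f s * g s) (fun s => df s * g s + f s * dg s).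
Proof.
move=> hf hg t; have [f1 f2] := hf t; have [g1 g2] := hg t; split.
  have := is_deriveB (is_deriveM f1 g1) (is_deriveM f2 g2) => H.
  apply: is_derive_eq; first by apply: isd_ext H _ => s /=; rewrite ReM.
  rewrite ReD !ReM /GRing.scale /=; ring.
have := is_deriveD (is_deriveM f1 g2) (is_deriveM f2 g1) => H.
apply: is_derive_eq; first by apply: isd_ext H _ => s /=; rewrite ImM.
rewrite ImD !ImM /GRing.scale /=; ring.
Qed.

Lemma cderivJ (f df : R -> R[i]) : has_cderiv f df ->
  has_cderiv (fun s => conjc (f s)) (fun s => conjc (df s)).
Proof.
move=> hf t; have [f1 f2] := hf t; split.
  by rewrite ReJ; apply: isd_ext f1 _ => s; rewrite ReJ.
by rewrite ImJ; apply: isd_ext (is_deriveN f2) _ => s; rewrite ImJ.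
Qed.

Lemma cderivR (f df : R -> R) : (forall t : R, is_derive t 1 f (df t)) ->
  has_cderiv (fun s => real_complex R (f s)) (fun s => real_complex R (df s)).
Proof.
move=> hf t; split => /=; first exact: hf.
exact: isd_ext (@is_derive_cst _ _ _ (0:R) t 1) _.
Qed.

Lemma cderiv_unique (f df dg : R -> R[i]) t : has_cderiv f df -> has_cderiv f dg -> df t = dg t.
Proof.
move=> h1 h2; have [a b] := h1 t; have [c d] := h2 t.
have e1 := @derive_val _ _ _ _ _ _ _ a; have e2 := @derive_val _ _ _ _ _ _ _ c.
have e3 := @derive_val _ _ _ _ _ _ _ b; have e4 := @derive_val _ _ _ _ _ _ _ d.
move: e1 e2 e3 e4; case: (df t) => x y; case: (dg t) => x' y' /= -> <- -> <-.
by [].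
Qed.

Lemma cderiv_ext (f g df : R -> R[i]) : (forall s, f s = g s) -> has_cderiv f df -> has_cderiv g df.
Proof. by move=> e; have <- : f = g by apply/funext. Qed.
Lemma cderiv_ext2 (f g df dg : R -> R[i]) : (forall s, f s = g s) -> (forall s, df s = dg s) ->
  has_cderiv f df -> has_cderiv g dg.
Proof. move=> e e'; have <- : f = g by apply/funext. by have <- : df = dg by apply/funext. Qed.

Lemma mxderiv_mul n m p (A dA : R -> 'M[R[i]]_(n,m)) (B dB : R -> 'M[R[i]]_(m,p)) :
  has_mxderiv A dA -> has_mxderiv B dB ->
  has_mxderiv (fun s => A s *m B s) (fun s => dA s *m B s + A s *m dB s).
Proof.
move=> hA hB i j.
have H := @cderiv_sum m (fun l s => A s i l * B s l j)
   (fun l s => dA s i l * B s l j + A s i l * dB s l j) (fun l => cderivM (hA i l) (hB l j)).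
apply: cderiv_ext2 H => s; first by rewrite !mxE.
rewrite !mxE -big_split /=; apply: eq_bigr => l _; by [].
Qed.

Lemma mxderiv_ctr n m (A dA : R -> 'M[R[i]]_(n,m)) :
  has_mxderiv A dA -> has_mxderiv (fun s => ctr (A s)) (fun s => ctr (dA s)).
Proof.
move=> hA i j; apply: cderiv_ext2 (cderivJ (hA j i)) => s; by rewrite /ctr !mxE.
Qed.

Lemma mxderiv_cplx n m (S dS : R -> 'M[R]_(n,m)) :
  has_rmxderiv S dS -> has_mxderiv (fun s => cplx_mx (S s)) (fun s => cplx_mx (dS s)).
Proof.
move=> hS i j; apply: cderiv_ext2 (cderivR (hS i j)) => s; by rewrite /cplx_mx !mxE.
Qed.

Lemma mxderiv_unique n m (A d1 d2 : R -> 'M[R[i]]_(n,m)) t :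
  has_mxderiv A d1 -> has_mxderiv A d2 -> d1 t = d2 t.
Proof. move=> h1 h2; apply/matrixP => i j; exact: cderiv_unique (h1 i j) (h2 i j). Qed.

Lemma mxderiv_ext n m (A B dA : R -> 'M[R[i]]_(n,m)) :
  (forall s, A s = B s) -> has_mxderiv A dA -> has_mxderiv B dA.
Proof. by move=> e; have <- : A = B by apply/funext. Qed.
End CD.
Section Alg.
Variable R : realType.
Local Notation C := (R[i]).

Lemma ctrM n m p (A : 'M[C]_(n,m)) (B : 'M[C]_(m,p)) : ctr (A *m B) = ctr B *m ctr A.
Proof. by rewrite /ctr map_mxM trmx_mul. Qed.
Lemma ctrD n m (A B : 'M[C]_(n,m)) : ctr (A + B) = ctr A + ctr B.
Proof. by rewrite /ctr map_mxD linearD. Qed.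
Lemma ctrK n m (A : 'M[C]_(n,m)) : ctr (ctr A) = A.
Proof. apply/matrixP => i j; rewrite /ctr !mxE; exact: conjcK. Qed.
Lemma ctr_row n k l (X : 'M[C]_(n,k)) (Y : 'M[C]_(n,l)) : ctr (row_mx X Y) = col_mx (ctr X) (ctr Y).
Proof. by rewrite /ctr map_row_mx tr_row_mx. Qed.

Lemma ortho_split n k l (X : 'M[C]_(n,k)) (Y : 'M[C]_(n,l)) :
  orthonormal_cols (row_mx X Y) ->
  [/\ ctr X *m X = 1%:M, ctr X *m Y = 0, ctr Y *m X = 0 & ctr Y *m Y = 1%:M].
Proof.
rewrite /orthonormal_cols ctr_row mul_col_row scalar_mx_block.
by move/eq_block_mx => [-> -> -> ->].
Qed.

Lemma ctr_cplx k (S : 'M[R]_k) : nonneg_diag S -> ctr (cplx_mx S) = cplx_mx S.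
Proof.
move=> [hd _]; apply/matrixP => i j; rewrite /ctr /cplx_mx !mxE conjc_real.
case: (eqVneq i j) => [->//|ne]; by rewrite !hd // eq_sym.
Qed.

Lemma cplx_unit k (S : 'M[R]_k) : nonneg_diag S -> (forall l, 0 < S l l) ->
  cplx_mx S \in unitmx.
Proof.
move=> [hd _] hp.
have -> : cplx_mx S = diag_mx (\row_l real_complex R (S l l)).
  apply/matrixP => i j; rewrite /cplx_mx !mxE.
  case: (eqVneq i j) => [<-|ne]; first by rewrite mulr1n.
  by rewrite (hd i j ne) /= mulr0n.
rewrite unitmxE det_diag unitfE; apply/prodf_neq0 => l _; rewrite mxE.
have := hp l; apply: contraTneq => /eqP.
by rewrite eq_complex /= => /andP[/eqP -> _]; rewrite ltxx.
Qed.
Lemma alg n m t (A dA : 'M[C]_(n,m)) (U dU : 'M[C]_(n,t)) (V dV : 'M[C]_(m,t)) (Sc dSc : 'M[C]_t) :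
  ctr U *m U = 1%:M -> ctr V *m V = 1%:M -> ctr Sc = Sc ->
  A *m V = U *m Sc -> ctr A *m U = V *m Sc ->
  dA *m V + A *m dV = dU *m Sc + U *m dSc ->
  ctr dA *m U + ctr A *m dU = dV *m Sc + V *m dSc ->
  Sc \in unitmx ->
  let P := 1%:M - U *m ctr U in let Q := 1%:M - V *m ctr V in
  P *m dU *m (Sc *m Sc) - A *m ctr A *m (P *m dU)
    = P *m dA *m V *m Sc + A *m Q *m ctr dA *m U
  /\ Q *m dV = Q *m ctr dA *m U *m invmx Sc + ctr A *m (P *m dU) *m invmx Sc.
Proof.
move=> hU hV hS F1 F2 E1 E2 uS P Q.
have F3 : ctr U *m A = Sc *m ctr V by rewrite -[A]ctrK -ctrM F2 ctrM hS.
have F4 : ctr V *m ctr A = Sc *m ctr U by rewrite -ctrM F1 ctrM hS.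
have PU : P *m U = 0 by rewrite /P mulmxBl mul1mx -mulmxA hU mulmx1 subrr.
have QV : Q *m V = 0 by rewrite /Q mulmxBl mul1mx -mulmxA hV mulmx1 subrr.
have h3 : P *m A = A *m Q.
  by rewrite /P /Q mulmxBl mulmxBr mul1mx mulmx1 -mulmxA F3 !mulmxA F1.
have h4 : A *m Q *m ctr A = A *m ctr A *m P.
  rewrite /P /Q !mulmxBr !mulmxBl !mulmx1.
  have L : A *m (V *m ctr V) *m ctr A = U *m (Sc *m (Sc *m ctr U)) by rewrite !mulmxA F1 -!mulmxA F4.
  have L' : A *m ctr A *m (U *m ctr U) = U *m (Sc *m (Sc *m ctr U)).
    by rewrite mulmxA -(mulmxA A) F2 mulmxA F1 -!mulmxA.
  by rewrite L L'.
have h5 : Q *m ctr A = ctr A *m P.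
  rewrite /P /Q mulmxBl mulmxBr mul1mx mulmx1.
  by rewrite -mulmxA F4 !mulmxA F2.
clearbody P Q.
have e1 : P *m dA *m V = P *m dU *m Sc - P *m A *m dV.
  have : P *m (dA *m V + A *m dV) = P *m (dU *m Sc + U *m dSc) by rewrite E1.
  by rewrite !mulmxDr !mulmxA PU mul0mx addr0 => <-; rewrite addrK.
have e2 : A *m Q *m ctr dA *m U = A *m Q *m dV *m Sc - A *m Q *m ctr A *m dU.
  have : A *m Q *m (ctr dA *m U + ctr A *m dU) = A *m Q *m (dV *m Sc + V *m dSc) by rewrite E2.
  by rewrite !mulmxDr !mulmxA -[A *m Q *m V](mulmxA) QV mulmx0 mul0mx addr0 => <-; rewrite addrK.
split.
  rewrite e2 e1 h3 h4 mulmxBl !mulmxA.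
  by rewrite addrA subrK.
have e3 : Q *m dV *m Sc = Q *m ctr dA *m U + ctr A *m P *m dU.
  have : Q *m (ctr dA *m U + ctr A *m dU) = Q *m (dV *m Sc + V *m dSc) by rewrite E2.
  by rewrite !mulmxDr !mulmxA QV mul0mx addr0 h5 => <-.
by rewrite -[Q *m dV](mulmxK uS) e3 mulmxDl !mulmxA.
Qed.
End Alg.

Unset Implicit Arguments.
Theorem mainTheorem7 (R : realType) (n m t : nat)
  (A dA : R -> 'M[R[i]]_(n, m))
  (U dU : R -> 'M[R[i]]_(n, t)) (S : R -> 'M[R]_t) (V dV : R -> 'M[R[i]]_(m, t))
  (Up : R -> 'M[R[i]]_(n, minn n m - t)) (Sp : R -> 'M[R]_(minn n m - t))
  (Vp : R -> 'M[R[i]]_(m, minn n m - t)) :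
  (1 <= t)%N -> (t < minn n m)%N ->
  has_mxderiv A dA -> has_mxderiv U dU -> rmx_differentiable S ->
  has_mxderiv V dV -> cmx_differentiable Up -> rmx_differentiable Sp ->
  cmx_differentiable Vp ->
  (forall tau : R,
     A tau = U tau *m cplx_mx (S tau) *m ctr (V tau)
             + Up tau *m cplx_mx (Sp tau) *m ctr (Vp tau) /\
     nonneg_diag (S tau) /\ nonneg_diag (Sp tau) /\
     orthonormal_cols (row_mx (U tau) (Up tau)) /\
     orthonormal_cols (row_mx (V tau) (Vp tau))) ->
  (n <= m)%N ->
  forall tau : R,
  (forall k : 'I_t, 0 < S tau k k) ->
    let Sc := cplx_mx (S tau) in
    let dU2 := (1%:M - U tau *m ctr (U tau)) *m dU tau in
    let dV2 := (1%:M - V tau *m ctr (V tau)) *m dV tau in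
    [/\ dU tau = U tau *m (ctr (U tau) *m dU tau) + dU2,
        dV tau = V tau *m (ctr (V tau) *m dV tau) + dV2,
        dU2 *m (Sc *m Sc) - A tau *m ctr (A tau) *m dU2
          = (1%:M - U tau *m ctr (U tau)) *m dA tau *m V tau *m Sc
            + A tau *m (1%:M - V tau *m ctr (V tau)) *m ctr (dA tau) *m U tau
      & dV2 = (1%:M - V tau *m ctr (V tau)) *m ctr (dA tau) *m U tau *m invmx Sc
              + ctr (A tau) *m dU2 *m invmx Sc].
Proof.
move=> _ _ hA hU [dS hS] hV _ _ _ hsvd _ tau Spos Sc dU2 dV2.
have F1 : forall s, A s *m V s = U s *m cplx_mx (S s).
  move=> s; have [eA [_ [_ [_ oV]]]] := hsvd s.
  have [hVV _ hVpV _] := ortho_split oV.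
  by rewrite eA mulmxDl -!mulmxA hVV hVpV !mulmx0 addr0 mulmx1.
have F2 : forall s, ctr (A s) *m U s = V s *m cplx_mx (S s).
  move=> s; have [eA [dg [_ [oU _]]]] := hsvd s.
  have [hUU _ hUpU _] := ortho_split oU.
  by rewrite eA ctrD !ctrM !ctrK (ctr_cplx dg) mulmxDl -!mulmxA hUU hUpU !mulmx0 addr0 mulmx1.
have E1 : dA tau *m V tau + A tau *m dV tau = dU tau *m Sc + U tau *m cplx_mx (dS tau).
  have D1 := mxderiv_mul hA hV.
  have D2 := mxderiv_ext (fun s => esym (F1 s)) (mxderiv_mul hU (mxderiv_cplx hS)).
  exact: (mxderiv_unique tau D1 D2).
have E2 : ctr (dA tau) *m U tau + ctr (A tau) *m dU tau = dV tau *m Sc + V tau *m cplx_mx (dS tau).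
  have D1 := mxderiv_mul (mxderiv_ctr hA) hU.
  have D2 := mxderiv_ext (fun s => esym (F2 s)) (mxderiv_mul hV (mxderiv_cplx hS)).
  exact: (mxderiv_unique tau D1 D2).
have [_ [dg [_ [oU oV]]]] := hsvd tau.
have [hUU _ _ _] := ortho_split oU.
have [hVV _ _ _] := ortho_split oV.
have [G3 G4] := alg hUU hVV (ctr_cplx dg) (F1 tau) (F2 tau) E1 E2 (cplx_unit dg Spos).
split => //.
- by rewrite /dU2 mulmxBl mul1mx mulmxA addrC subrK.
- by rewrite /dV2 mulmxBl mul1mx mulmxA addrC subrK.
Qed.
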